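(* Let $\mathcal{A}$ be a finite abelian group, $N\ge1$, and let $\alpha$ be a stationary $N$-step Markov measure on $\mathcal{A}^{\mathbb{Z}}$ with transition probabilities $q^{\mathbf{a}}_b=\Pr[c_N=b\mid (c_0,\dots,c_{N-1})=\mathbf{a}]$, $\mathbf{a}\in\mathcal{A}^{N}$, $b\in\mathcal{A}$. If all $q^{\mathbf{a}}_b$ are nonzero, then $\alpha$ is harmonically mixing.
   Context: An $N$-step Markov measure is a shift-invariant measure under which the distribution of each coordinate, conditioned on all previous coordinates, depends only on the previous $N$ coordinates via $q^{\mathbf{a}}_b$ (with $\sum_b q^{\mathbf{a}}_b=1$). Characters of $\mathcal{A}^{\mathbb{Z}}$ are $\chi=\bigotimes_{n}\chi_n$, $\chi_n$ characters of $\mathcal{A}$, all but finitely many trivial; rank$(\chi)$ is the number of nontrivial $\chi_n$. A measure is harmonically mixing if for every $\varepsilon>0$ there is $R$ with rank$(\chi)>R\Rightarrow|\int\chi\,d\mu|<\varepsilon$. *)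

(* Defs.v *)
From HB Require Import structures.
From mathcomp Require Import all_boot all_order all_algebra.
From mathcomp Require Import all_classical all_reals all_analysis.
From mathcomp Require Import complex.

Set Implicit Arguments.
Unset Strict Implicit.
Unset Printing Implicit Defensive.

Import Order.TTheory GRing.Theory Num.Theory.
Local Open Scope classical_set_scope.
Local Open Scope ring_scope.
Local Open Scope complex_scope.

Definition config (A : finZmodType) := int -> A.

Section config_instances.
Variable A : finZmodType.
HB.instance Definition _ := Choice.on (config A).
HB.instance Definition _ := isPointed.Build (config A) (fun _ => 0%R).
End config_instances.

Section Defs.
Variable A : finZmodType.

Definition cyl (m : int) (w : seq A) : set (config A) :=
  [set x | forall i : nat, (i < size w)%N -> x (m + i%:Z) = nth 0 w i].

Definition cylinders : set (set (config A)) :=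
  [set C | exists m w, C = cyl m w].

Definition shiftspace := g_sigma_algebraType cylinders.

Definition shift (x : config A) : config A := fun n => x (n + 1).

Variable R : realType.

Definition stationary (mu : probability shiftspace R) :=
  forall E : set shiftspace, measurable E -> mu (shift @^-1` E) = mu E.

(* N-step Markov property with transition probabilities q^a_b: the
   probability of c_(m+k) = b conditioned on any finite past
   c_m ... c_(m+k-1) = u ++ a (with |a| = N) is q^a_b. *)
Definition is_markov (N : nat) (mu : probability shiftspace R)
  (q : N.-tuple A -> A -> R) :=
  forall (m : int) (u : seq A) (a : N.-tuple A) (b : A),
    mu (cyl m (u ++ a ++ [:: b])) = (mu (cyl m (u ++ a)) * (q a b)%:E)%E.

Definition is_character (chi : A -> R[i]) :=
  (forall a b, chi (a + b) = chi a * chi b) /\ (forall a, `|chi a| = 1).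

Definition trivial_char (chi : A -> R[i]) : bool := [forall a, chi a == 1].

(* a character of A^Z : chi = (x) chi_n, with chi_n trivial outside the
   finite list s *)
Definition is_Zcharacter (s : seq int) (chi : int -> A -> R[i]) :=
  (forall n, is_character (chi n)) /\ (forall n, n \notin s -> trivial_char (chi n)).

Definition Zchar_eval (s : seq int) (chi : int -> A -> R[i]) (x : config A) : R[i] :=
  \prod_(n <- undup s) chi n (x n).

Definition Zchar_rank (s : seq int) (chi : int -> A -> R[i]) : nat :=
  size [seq n <- undup s | ~~ trivial_char (chi n)].

Definition cintegral (mu : probability shiftspace R) (f : shiftspace -> R[i]) : R[i] :=
  Complex (fine (\int[mu]_x (complex.Re (f x))%:E))
          (fine (\int[mu]_x (complex.Im (f x))%:E)).

Definition harmonically_mixing (mu : probability shiftspace R) :=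
  forall eps : R, 0 < eps -> exists R0 : nat,
    forall (s : seq int) (chi : int -> A -> R[i]),
      is_Zcharacter s chi -> (R0 < Zchar_rank s chi)%N ->
      `|cintegral mu (Zchar_eval s chi)| < eps%:C.

End Defs.

(* Main.v *)
Require Import Defs.
From HB Require Import structures.
From mathcomp Require Import all_boot all_order all_algebra.
From mathcomp Require Import all_classical all_reals all_analysis.
From mathcomp Require Import complex.
From mathcomp Require Import ring lra zify.
Import Order.TTheory GRing.Theory Num.Theory.
Local Open Scope ring_scope.
Local Open Scope complex_scope.
Set Implicit Arguments.
Unset Strict Implicit.
Unset Printing Implicit Defensive.

Section Words.
Variable A : finZmodType.

Fixpoint allwords (k : nat) : seq (seq A) :=
  if k is k'.+1 then flatten [seq [seq b :: w | w <- allwords k'] | b <- index_enum A]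
  else [:: [::]].

Lemma big_allwordsS (V : nmodType) k (F : seq A -> V) :
  \sum_(w <- allwords k.+1) F w = \sum_(b : A) \sum_(w <- allwords k) F (b :: w).
Proof.
rewrite /= big_flatten big_map /=.
by apply: eq_bigr => b _; rewrite big_map.
Qed.

Lemma big_allwords0 (V : nmodType) (F : seq A -> V) :
  \sum_(w <- allwords 0) F w = F [::].
Proof. by rewrite /= big_seq1. Qed.

Lemma size_allwords k w : w \in allwords k -> size w = k.
Proof.
elim: k w => [|k IH] w /=; first by rewrite inE => /eqP->.
move=> /flattenP [l /mapP [b _ ->]] /mapP [w' /IH <- ->] //.
Qed.

Lemma big_allwords_cat (V : nmodType) k1 k2 (F : seq A -> V) :
  \sum_(w <- allwords (k1 + k2)) F w =
  \sum_(u <- allwords k1) \sum_(v <- allwords k2) F (u ++ v).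
Proof.
elim: k1 F => [|k IH] F; first by rewrite add0n big_allwords0.
rewrite addSn !big_allwordsS; apply: eq_bigr => b _.
by rewrite IH.
Qed.

Lemma big_allwords_const (V : nzRingType) k :
  \sum_(w <- allwords k) (1 : V) = (#|A| ^ k)%:R.
Proof.
elim: k => [|k IH]; first by rewrite big_allwords0.
rewrite big_allwordsS.
under eq_bigr do rewrite IH.
by rewrite sumr_const -mulrnA expnS mulnC.
Qed.

Lemma eq_big_allwords (V : nmodType) k (F1 F2 : seq A -> V) :
  (forall w, size w = k -> F1 w = F2 w) ->
  \sum_(w <- allwords k) F1 w = \sum_(w <- allwords k) F2 w.
Proof.
move=> H; rewrite big_seq_cond [RHS]big_seq_cond; apply: eq_bigr => w /andP[/size_allwords + _].
exact: H.
Qed.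

End Words.
Section PhiDefs.
Variables (A : finZmodType) (R : realType) (N : nat) (q : N.-tuple A -> A -> R)
  (G : nat -> A -> R[i]).

Definition qs (st : seq A) (b : A) : R := q (insubd (nseq_tuple N (0:A)) st) b.
Definition lastN (w : seq A) : seq A := drop (size w - N) w.

Fixpoint Phi (r : nat) (w : seq A) : R[i] :=
  if r is r'.+1 then \sum_(b : A) G (size w) b * (qs (lastN w) b)%:C * Phi r' (rcons w b)
  else 1.

Fixpoint gam (j : nat) (w : seq A) : R[i] :=
  if w is b :: w' then G j b * gam j.+1 w' else 1.

Fixpoint kap (u c : seq A) : R :=
  if c is b :: c' then qs (lastN u) b * kap (rcons u b) c' else 1.

Lemma lastN_rcons w b :
  lastN (rcons w b) = drop ((size w).+1 - N - (size w - N)) (rcons (lastN w) b).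
Proof.
rewrite /lastN size_rcons.
have -> : rcons w b = take (size w - N) w ++ rcons (drop (size w - N) w) b.
  by rewrite -rcons_cat cat_take_drop.
rewrite drop_cat.
rewrite size_takel ?leq_subr //.
have -> : ((size w).+1 - N < size w - N)%N = false by apply/negbTE; rewrite -leqNgt; lia.
by [].
Qed.

Lemma lastN_eq w1 w2 b : size w1 = size w2 -> lastN w1 = lastN w2 ->
  lastN (rcons w1 b) = lastN (rcons w2 b).
Proof. by move=> Hs Hl; rewrite !lastN_rcons Hs Hl. Qed.

Lemma Phi_state r w1 w2 : size w1 = size w2 -> lastN w1 = lastN w2 -> Phi r w1 = Phi r w2.
Proof.
elim: r w1 w2 => //= r IH w1 w2 Hs Hl; apply: eq_bigr => b _.
rewrite Hs Hl (IH (rcons w1 b) (rcons w2 b)) //; first by rewrite !size_rcons Hs.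
exact: lastN_eq.
Qed.

Lemma lastN_cat u c : size c = N -> lastN (u ++ c) = c.
Proof. by rewrite /lastN size_cat => ->; rewrite addnK drop_size_cat. Qed.

Lemma Phi_unroll k r u : Phi (k + r) u =
  \sum_(c <- allwords A k) gam (size u) c * (kap u c)%:C * Phi r (u ++ c).
Proof.
elim: k u => [|k IH] u; first by rewrite big_allwords0 /= rmorph1 !mul1r cats0.
rewrite addSn /= big_allwordsS; apply: eq_bigr => b _.
rewrite IH big_distrr; apply: eq_bigr => c _ /=.
by rewrite size_rcons cat_rcons rmorphM /=; ring.
Qed.

Lemma gam_cat j a c : gam j (a ++ c) = gam j a * gam (j + size a) c.
Proof.
elim: a j => [|b a IH] j /=; first by rewrite addn0 mul1r.
by rewrite IH addnS -addSn mulrA.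
Qed.

Variable d : R.
Hypothesis dpos : 0 < d.
Hypothesis qge : forall t b, d <= q t b.
Hypothesis qsum : forall t, \sum_(b : A) q t b = 1.
Hypothesis Gle1 : forall j b, `|G j b| <= 1.
Variable nt : nat -> bool.
Hypothesis Gsum0 : forall j, nt j -> \sum_(b : A) G j b = 0.

Lemma qs_ge st b : d <= qs st b. Proof. exact: qge. Qed.
Lemma qs_ge0 st b : 0 <= qs st b. Proof. exact: le_trans (ltW dpos) (qs_ge _ _). Qed.
Lemma qs_sum st : \sum_(b : A) qs st b = 1. Proof. exact: qsum. Qed.
Lemma qsC_norm st b : `|(qs st b)%:C| = (qs st b)%:C.
Proof. by rewrite ger0_norm // ler0c qs_ge0. Qed.
Lemma qsC_sum st : \sum_(b : A) (qs st b)%:C = 1 :> R[i].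
Proof. by rewrite -raddf_sum /= qs_sum. Qed.

Lemma Phi_step r w (M : R[i]) : (forall b, `|Phi r (rcons w b)| <= M) -> `|Phi r.+1 w| <= M.
Proof.
move=> H /=; apply: (le_trans (ler_norm_sum _ _ _)).
apply: (@le_trans _ _ (\sum_(b : A) (qs (lastN w) b)%:C * M)).
  apply: ler_sum => b _; rewrite !normrM qsC_norm.
  rewrite -[X in X * M]mul1r; apply: ler_pM => //.
  - by rewrite mulr_ge0 // ler0c qs_ge0.
  - by apply: ler_wpM2r; [rewrite ler0c qs_ge0 | exact: Gle1].
by rewrite -mulr_suml qsC_sum mul1r.
Qed.

Lemma gam_le1 j c : `|gam j c| <= 1.
Proof.
elim: c j => /= [|b c IH] j; first by rewrite normr1.
by rewrite normrM; apply: mulr_ile1.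
Qed.

Lemma kap_ge0 u c : 0 <= kap u c.
Proof. by elim: c u => //= b c IH u; rewrite mulr_ge0 // qs_ge0. Qed.

Lemma kap_ge u c : d ^+ size c <= kap u c.
Proof.
elim: c u => /= [|b c IH] u; first by rewrite expr0.
by rewrite exprS; apply: ler_pM => //; [exact: ltW | rewrite exprn_ge0 // ltW | exact: qs_ge].
Qed.

Lemma kap_sum k u : \sum_(c <- allwords A k) kap u c = 1.
Proof.
elim: k u => [|k IH] u; first by rewrite big_allwords0.
rewrite big_allwordsS /=.
under eq_bigr do rewrite -big_distrr /= IH mulr1.
exact: qs_sum.
Qed.

Lemma char_bound (g : A -> R[i]) (f : A -> R) e : \sum_(b : A) g b = 0 ->
  (forall b, `|g b| <= 1) -> (forall b, e <= f b) ->
  `|\sum_(b : A) g b * (f b)%:C| <= (\sum_(b : A) f b - #|A|%:R * e)%:C.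
Proof.
move=> Hg H1 He.
have -> : \sum_(b : A) g b * (f b)%:C = \sum_(b : A) g b * (f b - e)%:C.
  have -> : \sum_(b : A) g b * (f b)%:C =
     \sum_(b : A) g b * (f b - e)%:C + e%:C * \sum_(b : A) g b.
    rewrite mulr_sumr -big_split /=.
    by apply: eq_bigr => b _; rewrite rmorphB /=; ring.
  by rewrite Hg mulr0 addr0.
apply: le_trans (ler_norm_sum _ _ _) _.
have -> : (\sum_(b : A) f b - #|A|%:R * e)%:C = \sum_(b : A) (f b - e)%:C.
  by rewrite -raddf_sum /= sumrB sumr_const mulr_natl.
apply: ler_sum => b _; rewrite normrM (ger0_norm (x := (f b - e)%:C)); last first.
  by rewrite ler0c subr_ge0.
rewrite -[X in _ <= X]mul1r; apply: ler_wpM2r => //.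
by rewrite ler0c subr_ge0.
Qed.

Definition rho : R := 1 - (#|A|%:R * d) ^+ N.+1.

Lemma gain r w (M : R[i]) : (N <= size w)%N -> nt (size w) ->
  (forall u, size u = (size w + N).+1 -> `|Phi r u| <= M) ->
  `|Phi (N.+1 + r) w| <= rho%:C * M.
Proof.
move=> Hw Hnt HM.
have E : Phi (N.+1 + r) w = \sum_(c <- allwords A N)
   (gam (size w).+1 c * Phi r (nseq (size w).+1 0 ++ c)) *
   \sum_(b : A) G (size w) b * (qs (lastN w) b * kap (rcons w b) c)%:C.
  rewrite addSn /=.
  under eq_bigr => b _ do rewrite Phi_unroll big_distrr /=.
  rewrite exchange_big /=.
  apply: eq_big_allwords => c Hc; rewrite big_distrr /=; apply: eq_bigr => b _.
  rewrite (@Phi_state r (rcons w b ++ c) (nseq (size w).+1 0 ++ c)); last first.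
  - by rewrite !lastN_cat.
  - by rewrite !size_cat size_rcons size_nseq.
  by rewrite size_rcons rmorphM /=; ring.
have M0 : 0 <= M.
  apply: le_trans (normr_ge0 _) (HM (nseq (size w + N).+1 0) _).
  by rewrite size_nseq.
rewrite E; apply: le_trans (ler_norm_sum _ _ _) _.
apply: (@le_trans _ _ (\sum_(c <- allwords A N) M *
   (\sum_(b : A) qs (lastN w) b * kap (rcons w b) c - #|A|%:R * d ^+ N.+1)%:C)).
  rewrite big_seq_cond [X in _ <= X]big_seq_cond; apply: ler_sum => c /andP[/size_allwords Hc _].
  rewrite !normrM; apply: ler_pM => //.
  - rewrite -[X in _ <= X]mul1r; apply: ler_pM => //; first exact: gam_le1.
    by apply: HM; rewrite size_cat size_nseq Hc addSn.
  - apply: char_bound; [exact: Gsum0 | by [] | move=> b].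
    rewrite exprS; apply: ler_pM; [exact: ltW dpos | exact: exprn_ge0 (ltW dpos) |
      exact: qs_ge | rewrite -Hc; exact: kap_ge].
rewrite -mulr_sumr mulrC; apply: ler_wpM2r => //.
rewrite -raddf_sum /= sumrB lecR.
rewrite exchange_big /=.
under eq_bigr do rewrite -mulr_sumr kap_sum mulr1.
rewrite qs_sum.
have -> : \sum_(i <- allwords A N) (#|A|%:R * d ^+ N.+1 : R) =
   (#|A|%:R * d ^+ N.+1) * \sum_(i <- allwords A N) (1 : R).
  by rewrite mulr_sumr; apply: eq_bigr => c _; rewrite mulr1.
rewrite big_allwords_const /rho natrX exprMn !exprS.
by rewrite le_eqVlt; apply/orP; left; apply/eqP; ring.
Qed.

Lemma Phi_bound n r w : (N <= size w)%N -> (N.+1 * n <= count nt (iota (size w) r))%N ->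
  `|Phi r w| <= (rho ^+ n)%:C.
Proof.
elim: n r w => [|n IHn] r w Hw Hc.
  rewrite expr0 rmorph1; elim: r w Hw {Hc} => [|r IH] w Hw; first by rewrite /= normr1.
  by apply: Phi_step => b; apply: IH; rewrite size_rcons; apply: leqW.
elim: r w Hw Hc => [|r IHr] w Hw Hc.
  by move: Hc => /=; rewrite leqn0 muln_eq0.
case Hnt: (nt (size w)).
- have Hs := count_size nt (iota (size w) r.+1); rewrite size_iota in Hs.
  have Hr : (N <= r)%N by move: Hc Hs; rewrite mulnS; lia.
  have Er : r.+1 = (N.+1 + (r - N))%N by lia.
  rewrite Er in Hc *.
  rewrite exprS rmorphM /=; apply: gain => // u Hu; apply: IHn; first by rewrite Hu; lia.
  rewrite Hu -addnS; move: Hc; rewrite iotaD count_cat.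
  have Hs1 := count_size nt (iota (size w) N.+1); rewrite size_iota in Hs1.
  rewrite mulnS; lia.
- apply: Phi_step => b; apply: IHr; first by rewrite size_rcons leqW.
  by move: Hc; rewrite /= Hnt size_rcons.
Qed.

Section Pabs.
Variable P : seq A -> R.
Hypothesis Pmarkov : forall u b, (N <= size u)%N -> P (rcons u b) = P u * qs (lastN u) b.
Hypothesis P0 : forall u, 0 <= P u.
Hypothesis Psum : \sum_(a <- allwords A N) P a = 1.

Lemma Qsum r u : (N <= size u)%N ->
  \sum_(c <- allwords A r) (P (u ++ c))%:C * gam (size u) c = (P u)%:C * Phi r u.
Proof.
elim: r u => [|r IH] u Hu; first by rewrite big_allwords0 cats0 /= !mulr1.
rewrite big_allwordsS /= big_distrr /=; apply: eq_bigr => b _.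
have -> : \sum_(w <- allwords A r) (P (u ++ b :: w))%:C * gam (size u) (b :: w) =
   G (size u) b * \sum_(c <- allwords A r) (P (rcons u b ++ c))%:C * gam (size (rcons u b)) c.
  rewrite big_distrr size_rcons; apply: eq_bigr => c _ /=; rewrite cat_rcons; ring.
rewrite IH ?size_rcons ?leqW // Pmarkov // rmorphM /=; ring.
Qed.

Lemma total_bound n r : (N.+1 * n <= count nt (iota N r))%N ->
  `|\sum_(w <- allwords A (N + r)) (P w)%:C * gam 0 w| <= (rho ^+ n)%:C.
Proof.
move=> Hc.
rewrite big_allwords_cat.
have -> : \sum_(u <- allwords A N) \sum_(v <- allwords A r) (P (u ++ v))%:C * gam 0 (u ++ v)
  = \sum_(u <- allwords A N) gam 0 u * ((P u)%:C * Phi r u).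
  apply: eq_big_allwords => u Hu; rewrite -Qsum ?Hu // big_distrr /=.
  by apply: eq_bigr => v _; rewrite gam_cat add0n Hu; ring.
apply: le_trans (ler_norm_sum _ _ _) _.
apply: (@le_trans _ _ (\sum_(u <- allwords A N) (P u)%:C * (rho ^+ n)%:C)).
  rewrite big_seq_cond [X in _ <= X]big_seq_cond; apply: ler_sum => u /andP[/size_allwords Hu _].
  rewrite !normrM (ger0_norm (x := (P u)%:C)) ?ler0c // mulrCA.
  apply: ler_wpM2l; first by rewrite ler0c.
  rewrite -[X in _ <= X]mul1r; apply: ler_pM => //; first exact: gam_le1.
  by apply: Phi_bound; rewrite Hu.
by rewrite -mulr_suml -raddf_sum /= Psum mul1r.
Qed.

End Pabs.
End PhiDefs.

Section Qpos.
Variables (A : finZmodType) (R : realType) (N : nat) (q : N.-tuple A -> A -> R).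
Variable P : seq A -> R.
Hypothesis P0 : forall u, 0 <= P u.
Hypothesis Pnil : P [::] = 1.
Hypothesis Padd : forall u, P u = \sum_(b : A) P (rcons u b).
Hypothesis Pmk : forall (u : seq A) (a : N.-tuple A) (b : A),
  P (u ++ a ++ [:: b]) = P (u ++ a) * q a b.
Hypothesis qnz : forall a b, q a b != 0.

Lemma Pmarkov u b : (N <= size u)%N -> P (rcons u b) = P u * qs q (lastN N u) b.
Proof.
move=> Hu.
have Hs : size (lastN N u) == N by rewrite /lastN size_drop subKn.
have := Pmk (take (size u - N) u) (insubd (nseq_tuple N (0:A)) (lastN N u)) b.
rewrite insubdK // /lastN catA cat_take_drop cats1 => ->.
by rewrite /qs.
Qed.

Lemma Pcat k u : \sum_(c <- allwords A k) P (u ++ c) = P u.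
Proof.
elim: k u => [|k IH] u; first by rewrite big_allwords0 cats0.
rewrite big_allwordsS (Padd u); apply: eq_bigr => b _.
by under eq_bigr do rewrite -cat_rcons; rewrite IH.
Qed.

Lemma qpos t b : 0 < q t b.
Proof.
have [a0 Ha0 Pa0] : exists2 a, a \in allwords A N & 0 < P a.
  case Hh: (has (fun a => 0 < P a) (allwords A N)); first by move/hasP: Hh.
  move/hasPn: Hh => H; exfalso.
  have := Pcat N [::]; rewrite Pnil big1_seq; first by move/eqP; rewrite eq_sym oner_eq0.
  by move=> a /andP[_ Ha]; apply/eqP; rewrite eq_le P0 andbT leNgt H.
have Hsa : size a0 = N by apply: size_allwords Ha0.
have Ppos : forall v, 0 < P (a0 ++ v).
  elim/last_ind => [|v c IH]; first by rewrite cats0.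
  rewrite -rcons_cat Pmarkov ?size_cat ?Hsa ?leq_addr //.
  rewrite mulr_gt0 // lt_def /qs qnz /=.
  by rewrite -(pmulr_rge0 _ IH) -Pmarkov ?P0 // size_cat Hsa leq_addr.
have := P0 (rcons (a0 ++ t) b).
rewrite Pmarkov ?size_cat ?Hsa ?leq_addr // lastN_cat ?size_tuple //.
rewrite /qs valKd (pmulr_rge0 _ (Ppos _)) => H.
by rewrite lt_def qnz.
Qed.

End Qpos.

Lemma exists_min (R : realType) (T : finType) (f : T -> R) :
  (forall x, 0 < f x) -> exists2 d, 0 < d & forall x, d <= f x.
Proof.
move=> Hf.
suff [d Hd H] : exists2 d, 0 < d & forall x, x \in enum T -> d <= f x.
  by exists d => // x; apply: H; rewrite mem_enum.
elim: (enum T) => [|x s [d Hd H]]; first by exists 1.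
exists (Num.min (f x) d); first by rewrite lt_min Hf Hd.
move=> y; rewrite inE => /orP[/eqP->|Hy]; first by rewrite ge_min lexx.
by rewrite ge_min H ?orbT.
Qed.

Lemma exists_pow_lt (R : realType) (r e : R) : 0 <= r < 1 -> 0 < e ->
  exists n, r ^+ n < e.
Proof.
move=> /andP[r0 r1] e0.
have Hr : `|r| < 1 by rewrite ger0_norm.
have := cvgr0_norm_lt _ (cvg_expr Hr) _ e0.
case=> n _ Hn; exists n.
have := Hn n (leqnn n); rewrite ger0_norm //; exact: exprn_ge0.
Qed.

Section Measure.
Variables (A : finZmodType) (R : realType) (mu : probability (shiftspace A) R).
Local Open Scope classical_set_scope.

Lemma cyl_measurable m (w : seq A) : measurable (cyl m w : set (shiftspace A)).
Proof. by apply: sub_sigma_algebra; exists m, w. Qed.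

Definition Pm m (w : seq A) : R := fine (mu (cyl m w)).

Lemma muE m (w : seq A) : mu (cyl m w) = (Pm m w)%:E.
Proof. by rewrite /Pm fineK //; apply: fin_num_measure; exact: cyl_measurable. Qed.

Lemma Pm_ge0 m (w : seq A) : 0 <= Pm m w.
Proof. by rewrite /Pm fine_ge0 // measure_ge0. Qed.

Lemma cyl_nil m : cyl m [::] = setT :> set (config A).
Proof. by apply/seteqP; split => x //= _ i; rewrite ltn0. Qed.

Lemma Pm_nil m : Pm m [::] = 1.
Proof. by rewrite /Pm (@cyl_nil m) probability_setT. Qed.

Lemma cyl_rcons m (u : seq A) (b : A) : cyl m (rcons u b) =
  cyl m u `&` [set x | x (m + (size u)%:Z) = b].
Proof.
apply/seteqP; split => x /=.
- move=> H; split.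
    move=> i Hi; have := H i; rewrite size_rcons nth_rcons Hi; apply.
    exact: ltnW.
  by have := H (size u); rewrite size_rcons nth_rcons ltnn eqxx; apply.
- case=> H1 H2 i; rewrite size_rcons ltnS leq_eqVlt => /orP[/eqP->|Hi].
    by rewrite nth_rcons ltnn eqxx.
  by rewrite nth_rcons Hi; apply: H1.
Qed.

Lemma cyl_cons m (b : A) (w : seq A) : cyl m (b :: w) = [set x | x m = b] `&` cyl (m + 1) w.
Proof.
apply/seteqP; split => x /=.
- move=> H; split; first by have := H 0%N; rewrite addr0; apply.
  by move=> i Hi; have := H i.+1; rewrite intS addrA; apply.
- case=> H0 H [|i] Hi; first by rewrite addr0.
  by rewrite intS addrA; apply: H.
Qed.

Lemma sum_pick (c : A) (F : A -> R) : \sum_(b : A) (c == b)%:R * F b = F c.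
Proof.
rewrite (bigD1 c) //= eqxx mul1r big1 ?addr0 // => b Hb.
by rewrite eq_sym (negbTE Hb) mul0r.
Qed.

Lemma indic_rcons m (u : seq A) (b : A) (x : config A) : (\1_(cyl m (rcons u b)) x : R) =
  \1_(cyl m u) x * (x (m + (size u)%:Z) == b)%:R.
Proof.
rewrite !indicE cyl_rcons in_setI.
have [E|Hn] := eqVneq (x (m + (size u)%:Z)) b.
  by rewrite (@mem_set _ [set y | y (m + (size u)%:Z) = b] x) // ?E ?eqxx andbT mulr1.
rewrite (@memNset _ [set y | y (m + (size u)%:Z) = b] x) ?andbF ?mulr0 //.
by move=> /= H; rewrite H eqxx in Hn.
Qed.

Lemma indic_cons m (b : A) (w : seq A) (x : config A) : (\1_(cyl m (b :: w)) x : R) =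
  (x m == b)%:R * \1_(cyl (m + 1) w) x.
Proof.
rewrite !indicE cyl_cons in_setI.
have [E|Hn] := eqVneq (x m) b.
  by rewrite (@mem_set _ [set y | y m = b] x) // ?E ?eqxx mul1r.
rewrite (@memNset _ [set y | y m = b] x) ?mul0r //.
by move=> /= H; rewrite H eqxx in Hn.
Qed.

Fixpoint window (x : config A) (m : int) (k : nat) : seq A :=
  if k is k'.+1 then x m :: window x (m + 1) k' else [::].

Lemma window_sum (H : seq A -> R) k m (x : config A) :
  \sum_(w <- allwords A k) H w * \1_(cyl m w) x = H (window x m k).
Proof.
elim: k m H => [|k IH] m H.
  by rewrite big_allwords0 cyl_nil indicT mulr1.
rewrite big_allwordsS /=.
under eq_bigr => b _ do (under eq_bigr => w _ do rewrite indic_cons mulrCA).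
under eq_bigr => b _ do rewrite -mulr_sumr (IH _ (fun w => H (b :: w))).
exact: sum_pick.
Qed.

Lemma int_indic_sum (I : Type) (s : seq I) (H : I -> R) (F : I -> set (shiftspace A)) :
  (forall i, measurable (F i)) ->
  (\int[mu]_x (\sum_(i <- s) H i * \1_(F i) x)%:E =
   \sum_(i <- s) (H i)%:E * mu (F i))%E.
Proof.
move=> mF.
under eq_integral do rewrite -sumEFin.
rewrite integral_sum //; last first.
  move=> i; have -> : (fun x => (H i * \1_(F i) x)%:E) = (fun x => (H i)%:E * (\1_(F i) x)%:E)%E.
    by apply/funext => x; rewrite EFinM.
  by apply: integrableZl => //; apply: integrable_indic.
apply: eq_bigr => i _.
have -> : (fun x => (H i * \1_(F i) x)%:E) = (fun x => (H i)%:E * (\1_(F i) x)%:E)%E.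
  by apply/funext => x; rewrite EFinM.
by rewrite integralZl //; [rewrite integral_indic // setIT | apply: integrable_indic].
Qed.

Lemma Pm_add m (u : seq A) : Pm m u = \sum_(b : A) Pm m (rcons u b).
Proof.
have := @int_indic_sum _ (index_enum A) (fun _ => 1) (fun b => cyl m (rcons u b)) (fun b => cyl_measurable _ _).
under eq_integral => x _ do (under eq_bigr => b _ do rewrite mul1r indic_rcons;
  rewrite -mulr_sumr (eq_bigr (fun b => (x (m + (size u)%:Z) == b)%:R * 1)); last by move=> b _; rewrite mulr1).
under eq_integral => x _ do rewrite sum_pick mulr1.
rewrite integral_indic //; last exact: cyl_measurable.
move=> H; apply: EFin_inj; rewrite -sumEFin -muE.
transitivity (\sum_(b : A) (1 * mu (cyl m (rcons u b))))%E; last first.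
  by apply: eq_bigr => b _; rewrite mul1e muE.
etransitivity; last exact: H.
by congr (mu _); rewrite setIT.
Qed.

Lemma int_window (H : seq A -> R) m k :
  (\int[mu]_x (H (window x m k))%:E = (\sum_(w <- allwords A k) H w * Pm m w)%:E)%E.
Proof.
under eq_integral => x _ do rewrite -window_sum.
rewrite int_indic_sum; last by move=> w; apply: cyl_measurable.
by rewrite -sumEFin; apply: eq_bigr => w _; rewrite muE EFinM.
Qed.

Lemma Re_sum (I : Type) (s : seq I) (F : I -> R[i]) :
  complex.Re (\sum_(i <- s) F i) = \sum_(i <- s) complex.Re (F i).
Proof.
elim: s => [|a s IH]; first by rewrite !big_nil; reflexivity.
rewrite !big_cons -IH.
by move: (F a) (\sum_(i <- s) F i) => [? ?] [? ?].
Qed.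

Lemma Im_sum (I : Type) (s : seq I) (F : I -> R[i]) :
  complex.Im (\sum_(i <- s) F i) = \sum_(i <- s) complex.Im (F i).
Proof.
elim: s => [|a s IH]; first by rewrite !big_nil; reflexivity.
rewrite !big_cons -IH.
by move: (F a) (\sum_(i <- s) F i) => [? ?] [? ?].
Qed.

Lemma Re_mulC (p : R) (z : R[i]) : complex.Re (p%:C * z) = p * complex.Re z.
Proof. by case: z => a b /=; rewrite mul0r subr0. Qed.

Lemma Im_mulC (p : R) (z : R[i]) : complex.Im (p%:C * z) = p * complex.Im z.
Proof. by case: z => a b /=; rewrite mul0r addr0. Qed.

Lemma cint_window (H : seq A -> R[i]) (f : shiftspace A -> R[i]) m k :
  (forall x, f x = H (window x m k)) ->
  cintegral mu f = \sum_(w <- allwords A k) (Pm m w)%:C * H w.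
Proof.
move=> Hf; rewrite /cintegral.
under eq_integral => x _ do rewrite Hf.
under [in X in Complex _ X]eq_integral => x _ do rewrite Hf.
rewrite (int_window (fun w => complex.Re (H w))) (int_window (fun w => complex.Im (H w))) /=.
apply/eqP; rewrite eq_complex /= Re_sum Im_sum; apply/andP; split; apply/eqP;
  apply: eq_bigr => w _; by rewrite ?Re_mulC ?Im_mulC mulrC.
Qed.

End Measure.

Lemma char_sum0 (R : realType) (A : finZmodType) (chi : A -> R[i]) :
  is_character chi -> ~~ trivial_char chi -> \sum_(b : A) chi b = 0.
Proof.
move=> [Hm _] /forallPn [a0 Ha0].
have E : \sum_(b : A) chi b = chi a0 * \sum_(b : A) chi b.
  rewrite mulr_sumr (reindex_inj (addrI a0)) /=.
  by apply: eq_bigr => b _; rewrite Hm.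
have : (\sum_(b : A) chi b) * (1 - chi a0) = 0.
  by rewrite mulrBr mulr1 mulrC -E subrr.
by move/eqP; rewrite mulf_eq0 subr_eq0 (eq_sym 1) (negbTE Ha0) orbF => /eqP.
Qed.

Lemma gam_window (R : realType) (A : finZmodType) (chi : int -> A -> R[i]) (m : int)
  (x : config A) k j :
  gam (fun j : nat => chi (m + j%:Z)) j (window x (m + j%:Z) k) =
  \prod_(i <- iota j k) chi (m + i%:Z) (x (m + i%:Z)).
Proof.
elim: k j => [|k IH] j /=; first by rewrite big_nil.
rewrite big_cons -IH.
by have -> : m + j%:Z + 1 = m + (j.+1)%:Z by lia.
Qed.

Unset Implicit Arguments.

Theorem mainTheorem8 (R : realType) (A : finZmodType) (N : nat)
  (mu : probability (shiftspace A) R) (q : N.-tuple A -> A -> R) :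
  (1 <= N)%N ->
  stationary mu ->
  (forall a : N.-tuple A, \sum_(b : A) q a b = 1) ->
  is_markov mu q ->
  (forall (a : N.-tuple A) (b : A), q a b != 0) ->
  harmonically_mixing mu.
Proof.
move=> _ _ Hsum Hmk Hnz eps eps0.
have Pmk : forall m (u : seq A) (a : N.-tuple A) (b : A),
    Pm mu m (u ++ a ++ [:: b]) = Pm mu m (u ++ a) * q a b.
  by move=> m u a b; have := Hmk m u a b; rewrite !muE -EFinM => -[].
have Hqpos : forall t b, 0 < q t b.
  move=> t b; apply: (@qpos A R N q (Pm mu 0)) => //.
  - by move=> u; exact: Pm_ge0.
  - exact: Pm_nil.
  - by move=> u; exact: Pm_add.
have [d d0 Hd] := @exists_min R _ (fun p : (N.-tuple A * A)%type => q p.1 p.2)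
  (fun p => Hqpos p.1 p.2).
have Hd' : forall t b, d <= q t b by move=> t b; exact: (Hd (t, b)).
have HA : (0 < #|A|)%N by apply/card_gt0P; exists 0.
have Hx1 : #|A|%:R * d <= 1.
  have : \sum_(b : A) d <= \sum_(b : A) q (nseq_tuple N (0:A)) b by apply: ler_sum.
  by rewrite Hsum sumr_const mulr_natl.
have Hx0 : 0 < #|A|%:R * d by rewrite mulr_gt0 // ltr0n.
have Hrho : 0 <= rho A N d < 1.
  rewrite /rho; apply/andP; split.
    by rewrite subr_ge0 exprn_ile1 // ltW.
  by rewrite ltrBlDr ltrDl exprn_gt0.
have [n Hn] := exists_pow_lt Hrho eps0.
exists (N.+1 * n)%N.
move=> s chi [Hch Htriv] Hrank.
pose B := (\max_(z <- s) `|z|%N)%N.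
have HB : forall z, z \in s -> (`|z|%N <= B)%N.
  by move=> z Hz; rewrite /B; apply: leq_bigmax_seq.
pose m : int := - (B + N)%:Z.
pose r := (2 * B + 1)%N.
pose G := fun j : nat => chi (m + j%:Z).
pose nt := fun j : nat => ~~ trivial_char (chi (m + j%:Z)).
have Hwin : forall x, Zchar_eval s chi x = gam G 0 (window x m (N + r)).
  move=> x; rewrite /Zchar_eval.
  have := gam_window chi m x (N + r) 0; rewrite addr0 /G => ->.
  pose W := map (fun i : nat => m + i%:Z) (iota 0 (N + r)).
  have E2 : \prod_(z <- W) chi z (x z) =
            \prod_(i <- iota 0 (N + r)) chi (m + i%:Z) (x (m + i%:Z)) by rewrite big_map.
  rewrite -E2.
  have Hsub : forall z, z \in s -> z \in W.
    move=> z Hz; have := HB z Hz => Hb; apply/mapP; exists `|z - m|%N.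
      by rewrite mem_iota /r /m; lia.
    by rewrite /m; lia.
  have E3 : \prod_(z <- W) chi z (x z) = \prod_(z <- W | z \in s) chi z (x z).
    rewrite [RHS]big_mkcond /=; apply: eq_bigr => z _; case: ifP => // Hz.
    by have /forallP H := Htriv z (negbT Hz); exact/eqP/H.
  rewrite E3 -(big_filter W).
  apply: perm_big; apply: uniq_perm.
  - exact: undup_uniq.
  - rewrite filter_uniq // map_inj_uniq ?iota_uniq //.
    by move=> i j /addrI /eqP; rewrite eqz_nat => /eqP.
  - move=> z; rewrite mem_undup mem_filter.
    by case Hz: (z \in s) => //=; rewrite Hsub.
rewrite (cint_window mu Hwin).
have Hcount : (N.+1 * n <= count nt (iota N r))%N.
  apply: leq_trans (ltnW Hrank) _.
  rewrite /Zchar_rank -size_filter -(size_map (fun z => `|z - m|%N)).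
  apply: uniq_leq_size.
  - rewrite map_inj_in_uniq ?filter_uniq ?undup_uniq //.
    move=> z1 z2; rewrite !mem_filter !mem_undup => /andP[_ H1] /andP[_ H2] E.
    have := HB z1 H1; have := HB z2 H2; rewrite /m in E; lia.
  - move=> y /mapP [z]; rewrite mem_filter mem_undup => /andP[Hnt Hz] ->.
    have := HB z Hz => Hb.
    rewrite mem_filter mem_iota; apply/andP; split.
      rewrite /nt; have -> : m + (`|z - m|%N)%:Z = z by rewrite /m; lia.
      exact: Hnt.
    by rewrite /r /m; lia.
apply: le_lt_trans (@total_bound A R N q G d d0 Hd' Hsum _ nt _ (Pm mu m) _ _ _ n r Hcount) _.
- by move=> j b; have [_ ->] := Hch (m + j%:Z).
- by move=> j Hj; exact: (char_sum0 (Hch (m + j%:Z)) Hj).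
- by move=> u b Hu; apply: Pmarkov.
- by move=> u; exact: Pm_ge0.
- by have := Pcat (Pm_add mu m) N [::]; rewrite Pm_nil.
by rewrite ltcR.
Qed.
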